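(* Consider plain SGD (no momentum) with scalar learning rate $\lambda>0$ and batch size $S$ on $L_2$-regularized linear regression in the limit $N\to\infty$, with $[A,\Gamma]=0$. Let $K:=A+\Gamma$, $U:=\mathbf{u}\mathbf{u}^{\mathrm T}$, $G:=2I_D-\lambda\left(K+\frac1SK^{-1}A^2\right)$, $\kappa:=\frac{\mathrm{Tr}[A^2K^{-1}G^{-1}]}{1-\frac\lambda S\mathrm{Tr}[A^2K^{-1}G^{-1}]}$, $r:=\frac{\mathrm{Tr}[A^3K^{-3}\Gamma^2G^{-1}U]}{1-\frac\lambda S\mathrm{Tr}[A^2K^{-1}G^{-1}]}$ (with $K,G$ invertible and the denominator nonzero). Then the expected test loss $L_{\rm test}:=\frac12\mathbb{E}_{\mathbf{w}}[(\mathbf{w}-\mathbf{u})^{\mathrm T}A(\mathbf{w}-\mathbf{u})]$ is $$L_{\rm test}=\frac{\lambda}{2S}\left(\mathrm{Tr}[AK^{-2}\Gamma^2U]\kappa+r\right)+\frac12\mathrm{Tr}[AK^{-2}\Gamma^2U].$$ Moreover, if $A$, $\Gamma$ and $U$ pairwise commute, then $$\Sigma=\frac\lambda S\mathrm{Tr}[AK^{-2}\Gamma^2U]\left(1+\frac{\lambda\kappa}{S}\right)AK^{-1}G^{-1}+\frac\lambda S\left(A^2K^{-2}\Gamma^2U+\frac{\lambda r}{S}A\right)K^{-1}G^{-1}.$$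
   Context: Data: $x_i\in\mathbb{R}^D$ i.i.d. $\mathcal N(0,A)$, $A$ symmetric positive definite; labels $y_i=\mathbf{u}^{\mathrm T}x_i$; $\Gamma$ symmetric. Loss $L_\Gamma(\mathbf{w})=\frac{1}{2N}\sum_i[(\mathbf{w}-\mathbf{u})^{\mathrm T}x_i]^2+\frac12\mathbf{w}^{\mathrm T}\Gamma\mathbf{w}$, whose Hessian is $K=A+\Gamma$ as $N\to\infty$. SGD: $\mathbf{w}_t=\mathbf{w}_{t-1}-\frac\lambda S\sum_{i\in B_t}\nabla\ell_i(\mathbf{w}_{t-1})$. The stationary distribution has mean $\mathbf{w}^*=K^{-1}A\mathbf{u}$ and covariance $\Sigma:=\mathbb{E}_{\mathbf{w}}[(\mathbf{w}-\mathbf{w}^* )(\mathbf{w}-\mathbf{w}^* )^{\mathrm T}]$, determined by the stationarity equation $\lambda(K\Sigma+\Sigma K)-\lambda^2K\Sigma K=\lambda^2C$, where the averaged minibatch noise covariance is $C=\frac1S\big(A\Sigma A+\mathrm{Tr}[A\Sigma]A+\mathrm{Tr}[AK^{-2}\Gamma^2U]A+AK^{-1}\Gamma U\Gamma K^{-1}A\big)$. *)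

(* Defs.v *)
From HB Require Import structures.
From mathcomp Require Import all_boot all_order all_algebra.
From mathcomp Require Import reals.
Set Implicit Arguments. Unset Strict Implicit. Unset Printing Implicit Defensive.
Import Order.TTheory GRing.Theory Num.Theory.
Local Open Scope ring_scope.

Section SGD.
Variables (R : realType) (n : nat).
Implicit Types (A Gam Sig : 'M[R]_n) (u : 'cV[R]_n) (lam : R) (S : nat).

Definition posdef A :=
  A^T = A /\ forall v : 'cV[R]_n, v != 0 -> 0 < (v^T *m A *m v) 0 0.

Definition Kmat A Gam : 'M[R]_n := A + Gam.
Definition Umat u : 'M[R]_n := u *m u^T.
Definition Kinv A Gam : 'M[R]_n := invmx (Kmat A Gam).

Definition Gmat A Gam lam S : 'M[R]_n :=
  (2%:R)%:M - lam *: (Kmat A Gam + (S%:R)^-1 *: (Kinv A Gam *m A *m A)).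
Definition Ginv A Gam lam S : 'M[R]_n := invmx (Gmat A Gam lam S).

Definition tAKG A Gam lam S : R :=
  \tr (A *m A *m Kinv A Gam *m Ginv A Gam lam S).

Definition denom A Gam lam S : R := 1 - lam / S%:R * tAKG A Gam lam S.

Definition kappa A Gam lam S : R := tAKG A Gam lam S / denom A Gam lam S.

Definition rr A Gam u lam S : R :=
  \tr (A *m A *m A *m Kinv A Gam *m Kinv A Gam *m Kinv A Gam *m Gam *m Gam
        *m Ginv A Gam lam S *m Umat u) / denom A Gam lam S.

Definition tbias A Gam u : R :=
  \tr (A *m Kinv A Gam *m Kinv A Gam *m Gam *m Gam *m Umat u).

(* averaged minibatch noise covariance C *)
Definition Cmat A Gam u S Sig : 'M[R]_n :=
  (S%:R)^-1 *: (A *m Sig *m A + \tr (A *m Sig) *: A + tbias A Gam u *: A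
     + A *m Kinv A Gam *m Gam *m Umat u *m Gam *m Kinv A Gam *m A).

Definition stationary A Gam u lam S Sig : Prop :=
  lam *: (Kmat A Gam *m Sig + Sig *m Kmat A Gam)
    - lam ^+ 2 *: (Kmat A Gam *m Sig *m Kmat A Gam)
  = lam ^+ 2 *: Cmat A Gam u S Sig.

(* mean of the stationary distribution w* = K^{-1} A u *)
Definition wstar A Gam u : 'cV[R]_n := Kinv A Gam *m A *m u.

(* expected test loss (1/2) E[(w-u)^T A (w-u)] for w with mean w* and
   covariance Sig, written via the bias-variance decomposition
   E[(w-u)^T A (w-u)] = Tr[A Sig] + (w*-u)^T A (w*-u). *)
Definition Ltest A Gam u Sig : R :=
  2%:R^-1 * (\tr (A *m Sig)
    + ((wstar A Gam u - u)^T *m A *m (wstar A Gam u - u)) 0 0).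

End SGD.

(* Main.v *)
Require Import Defs.
From HB Require Import structures.
From mathcomp Require Import all_boot all_order all_algebra.
From mathcomp Require Import reals.
From mathcomp Require Import ring lra.
Import Order.TTheory GRing.Theory Num.Theory.
Local Open Scope ring_scope.
Set Implicit Arguments. Unset Strict Implicit.

Lemma swapL (R : comPzSemiRingType) n (X Y : 'M[R]_n) (h : X *m Y = Y *m X) m (P : 'M[R]_(m, n)) :
  P *m X *m Y = P *m Y *m X.
Proof. by rewrite -!mulmxA h. Qed.

Lemma cancelL (R : comPzSemiRingType) n (X Y : 'M[R]_n) (h : X *m Y = 1%:M) m (P : 'M[R]_(m, n)) :
  P *m X *m Y = P.
Proof. by rewrite -mulmxA h mulmx1. Qed.

Lemma commM (R : comPzSemiRingType) n (X Y Z : 'M[R]_n) :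
  X *m Y = Y *m X -> X *m Z = Z *m X -> X *m (Y *m Z) = Y *m Z *m X.
Proof. by move=> h1 h2; rewrite mulmxA h1 -mulmxA h2 mulmxA. Qed.

Lemma trZ (R : pzRingType) m n (a : R) (B : 'M[R]_(m, n)) : (a *: B)^T = a *: B^T.
Proof. by apply/matrixP => i j; rewrite !mxE. Qed.
Lemma trD (R : pzRingType) m n (B C : 'M[R]_(m, n)) : (B + C)^T = B^T + C^T.
Proof. by apply/matrixP => i j; rewrite !mxE. Qed.
Lemma trB (R : pzRingType) m n (B C : 'M[R]_(m, n)) : (B - C)^T = B^T - C^T.
Proof. by apply/matrixP => i j; rewrite !mxE. Qed.

Lemma modid (R : comPzRingType) m n (l s : R) (x y z : 'M[R]_(m, n)) :
  l *: (x + x) - l ^+ 2 *: y - l ^+ 2 *: (s *: z) =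
  l *: (2%:R *: x - l *: y - (l * s) *: z).
Proof. by apply/matrixP => i j; rewrite !mxE; ring. Qed.

Lemma final (R : comPzRingType) n (K M Q A W V : 'M[R]_n) (l s al be T b : R) :
  l *: (K *m M + M *m K) - l ^+ 2 *: (K *m M *m K) - l ^+ 2 *: (s *: (A *m M *m A)) = l *: A ->
  l *: (K *m Q + Q *m K) - l ^+ 2 *: (K *m Q *m K) - l ^+ 2 *: (s *: (A *m Q *m A)) = l *: V ->
  W = V -> l * al = l ^+ 2 * s * (T + b) -> l * be = l ^+ 2 * s ->
  l *: (K *m (al *: M + be *: Q) + (al *: M + be *: Q) *m K) -
  l ^+ 2 *: (K *m (al *: M + be *: Q) *m K) =
  l ^+ 2 *: (s *: (A *m (al *: M + be *: Q) *m A + T *: A + b *: A + W)).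
Proof.
move=> h1 h2 -> h3 h4.
rewrite !(mulmxDr, mulmxDl) -!scalemxAr -!scalemxAl.
move: h1 h2.
move: (K *m M *m K) (A *m M *m A) (K *m Q *m K) (A *m Q *m A) => KMK AMA KQK AQA.
move: (K *m M) (M *m K) (K *m Q) (Q *m K) => KM MK KQ QK h1 h2.
apply/matrixP => i j; move/matrixP/(_ i j): h1; move/matrixP/(_ i j): h2.
rewrite !mxE => h2 h1.
apply/eqP; rewrite -subr_eq0; apply/eqP.
transitivity (al * (l * (KM i j + MK i j) - l ^+ 2 * KMK i j - l ^+ 2 * (s * AMA i j) - l * A i j)
  + be * (l * (KQ i j + QK i j) - l ^+ 2 * KQK i j - l ^+ 2 * (s * AQA i j) - l * V i j)
  + A i j * (l * al - l ^+ 2 * s * (T + b)) + V i j * (l * be - l ^+ 2 * s)); first by ring.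
by rewrite h1 h2 h3 h4 !subrr; ring.
Qed.

Lemma comm_inv (R : comUnitRingType) n (X Y : 'M[R]_n) :
  X \in unitmx -> X *m Y = Y *m X -> invmx X *m Y = Y *m invmx X.
Proof.
move=> hX h.
rewrite -[invmx X *m Y]mulmx1 -(mulmxV hX) !mulmxA -(mulmxA _ Y) -h.
by rewrite mulmxA mulVmx // mul1mx.
Qed.

Theorem theorem3 (R : realType) (n S : nat) (A Gam Sig : 'M[R]_n)
  (u : 'cV[R]_n) (lam : R)
  (hA : posdef A) (hGam : Gam^T = Gam) (hAG : A *m Gam = Gam *m A)
  (hlam : 0 < lam) (hS : (0 < S)%N)
  (hK : Kmat A Gam \in unitmx) (hG : Gmat A Gam lam S \in unitmx)
  (hden : denom A Gam lam S != 0)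
  (hSigsym : Sig^T = Sig)
  (hstat : stationary A Gam u lam S Sig)
  (huniq : forall Sig' : 'M[R]_n, Sig'^T = Sig' ->
             stationary A Gam u lam S Sig' -> Sig' = Sig) :
  Ltest A Gam u Sig =
    lam / (2%:R * S%:R) * (tbias A Gam u * kappa A Gam lam S + rr A Gam u lam S)
    + 2%:R^-1 * tbias A Gam u
  /\
  (A *m Umat u = Umat u *m A -> Gam *m Umat u = Umat u *m Gam ->
   Sig =
     (lam / S%:R * tbias A Gam u * (1 + lam * kappa A Gam lam S / S%:R))
       *: (A *m Kinv A Gam *m Ginv A Gam lam S)
     + (lam / S%:R) *:
       ((A *m A *m Kinv A Gam *m Kinv A Gam *m Gam *m Gam *m Umat u
         + (lam * rr A Gam u lam S / S%:R) *: A)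
        *m Kinv A Gam *m Ginv A Gam lam S)).
Proof.
move: hA => [hAT _].
set K := Kmat A Gam in hK hstat *.
set Ki := Kinv A Gam.
set G := Gmat A Gam lam S in hG *.
set Gi := Ginv A Gam lam S.
set U := Umat u.
set s := (S%:R : R)^-1.
have eKi : Ki = invmx K by [].
have eGi : Gi = invmx G by [].
have eG : G = (2%:R)%:M - lam *: (K + s *: (Ki *m A *m A)) by [].
have cGA : Gam *m A = A *m Gam by rewrite hAG.
have cKA : K *m A = A *m K by rewrite /K /Kmat mulmxDl mulmxDr hAG.
have cKG : K *m Gam = Gam *m K by rewrite /K /Kmat mulmxDl mulmxDr hAG.
have KKi : K *m Ki = 1%:M by rewrite eKi mulmxV.
have KiK : Ki *m K = 1%:M by rewrite eKi mulVmx.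
have cKiK : Ki *m K = K *m Ki by rewrite KKi KiK.
have cKiA : Ki *m A = A *m Ki by rewrite eKi comm_inv.
have cKiG : Ki *m Gam = Gam *m Ki by rewrite eKi comm_inv.
have commG X : X *m K = K *m X -> X *m Ki = Ki *m X -> X *m A = A *m X -> G *m X = X *m G.
  move=> h1 h2 h3; rewrite eG mulmxBl mulmxBr mul_scalar_mx mul_mx_scalar.
  rewrite -!scalemxAl -!scalemxAr mulmxDl mulmxDr -!scalemxAl -!scalemxAr h1.
  by rewrite -(commM (commM h2 h3) h3).
have cGmA : G *m A = A *m G by apply: commG; rewrite // -?cKiA // -?cKA.
have cGmG : G *m Gam = Gam *m G by apply: commG; rewrite // -?cKiG // -?cKG.
have cGmK : G *m K = K *m G by apply: commG; rewrite // -?cKiK // -?cKA.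
have cGmKi : G *m Ki = Ki *m G by apply: commG; rewrite // -?cKiK // -?cKiA.
have GGi : G *m Gi = 1%:M by rewrite eGi mulmxV.
have GiG : Gi *m G = 1%:M by rewrite eGi mulVmx.
have cGiG : Gi *m G = G *m Gi by rewrite GGi GiG.
have cGiA : Gi *m A = A *m Gi by rewrite eGi comm_inv.
have cGiGa : Gi *m Gam = Gam *m Gi by rewrite eGi comm_inv.
have cGiK : Gi *m K = K *m Gi by rewrite eGi comm_inv.
have cGiKi : Gi *m Ki = Ki *m Gi by rewrite eGi comm_inv.
have rules := (cGA, swapL cGA, cKA, swapL cKA, cKG, swapL cKG, cKiK, swapL cKiK,
  cKiA, swapL cKiA, cKiG, swapL cKiG, cGmA, swapL cGmA, cGmG, swapL cGmG,
  cGmK, swapL cGmK, cGmKi, swapL cGmKi, cGiG, swapL cGiG, cGiA, swapL cGiA,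
  cGiGa, swapL cGiGa, cGiK, swapL cGiK, cGiKi, swapL cGiKi,
  KKi, cancelL KKi, GGi, cancelL GGi, mul1mx, mulmx1).
have test : \tr (Gam *m Ki *m A *m (A *m Ki *m Gi) *m A *m Ki *m Gam *m U) =
   \tr (A *m A *m A *m Ki *m Ki *m Ki *m Gam *m Gam *m Gi *m U).
  by rewrite ?mulmxA ?rules.
set b := tbias A Gam u.
set t := tAKG A Gam lam S.
set r' := \tr (A *m A *m A *m Ki *m Ki *m Ki *m Gam *m Gam *m Gi *m U).
set T := \tr (A *m Sig).
have hKT : K^T = K by rewrite /K /Kmat trD hAT hGam.
have hKiT : Ki^T = Ki by rewrite eKi trmx_inv hKT.
have bias : ((wstar A Gam u - u)^T *m A *m (wstar A Gam u - u)) 0 0 = b.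
  have hu : u = Ki *m A *m u + Ki *m Gam *m u.
    by rewrite -mulmxDl -mulmxDr (_ : A + Gam = K) // KiK mul1mx.
  have -> : wstar A Gam u - u = - (Ki *m Gam *m u).
    by rewrite /wstar -/Ki {2}hu opprD addrA subrr add0r.
  have -> : (- (Ki *m Gam *m u))^T = - (Ki *m Gam *m u)^T by rewrite linearN.
  rewrite mulmxN !mulNmx opprK !trmx_mul hKiT hGam.
  rewrite (_ : forall M : 'M[R]_1, M 0 0 = \tr M); last by move=> M; rewrite /mxtrace big_ord1.
  rewrite -!mulmxA mxtrace_mulC /b /tbias -/Ki -/U /U /Umat.
  by rewrite ?mulmxA ?rules.
set M := A *m Ki *m Gi.
have eA : A = 2%:R *: (A *m Gi) - lam *: (A *m K *m Gi) - (lam * s) *: (A *m A *m A *m Ki *m Gi).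
  rewrite {1}(_ : A = A *m G *m Gi); last by rewrite (cancelL GGi).
  rewrite eG.
  rewrite mulmxBr mulmxBl mul_mx_scalar -scalemxAl -scalemxAr mulmxDr.
  rewrite -scalemxAl mulmxDl -scalemxAr -scalemxAl scalerDr scalerA opprD addrA.
  by rewrite ?mulmxA ?rules.
have hx : T = 2%:R * \tr (A *m Gi *m Sig) - lam * \tr (A *m K *m Gi *m Sig)
   - (lam * s) * \tr (A *m A *m A *m Ki *m Gi *m Sig).
  by rewrite /T {1}eA !mulmxBl -!scalemxAl !raddfB /= !mxtraceZ.
set W := A *m Ki *m Gam *m U *m Gam *m Ki *m A.
have hs2 : lam *: (K *m Sig + Sig *m K) - lam ^+ 2 *: (K *m Sig *m K) =
  lam ^+ 2 *: (s *: (A *m Sig *m A + T *: A + b *: A + W)) := hstat.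
have := congr1 (fun X => \tr (M *m X)) hs2.
rewrite /= mulmxBr -!scalemxAr raddfB /= !mxtraceZ !(mulmxDr M) !mxtraceD -!scalemxAr !mxtraceZ.
have e1 : \tr (M *m (K *m Sig)) = \tr (A *m Gi *m Sig) by rewrite /M ?mulmxA ?rules.
have e2 : \tr (M *m (Sig *m K)) = \tr (A *m Gi *m Sig) by rewrite mulmxA mxtrace_mulC /M ?mulmxA ?rules.
have e3 : \tr (M *m (K *m Sig *m K)) = \tr (A *m K *m Gi *m Sig) by rewrite !mulmxA mxtrace_mulC /M ?mulmxA ?rules.
have e4 : \tr (M *m (A *m Sig *m A)) = \tr (A *m A *m A *m Ki *m Gi *m Sig) by rewrite !mulmxA mxtrace_mulC /M ?mulmxA ?rules.
have e5 : \tr (M *m A) = t by rewrite /M /t /tAKG -/Ki -/Gi ?mulmxA ?rules.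
have e6 : \tr (M *m W) = r'.
  have -> : M *m W = (M *m A *m Ki *m Gam *m U) *m (Gam *m Ki *m A) by rewrite /W !mulmxA.
  by rewrite mxtrace_mulC /M /r' ?mulmxA ?rules.
rewrite e1 e2 e3 e4 e5 e6 => htr.
have hT : T = lam * s * ((T + b) * t + r').
  have lam0 : lam != 0 by rewrite gt_eqF.
  apply: (mulfI lam0); rewrite {1}hx.
  move: htr; set x1 := \tr (A *m Gi *m Sig); set x2 := \tr (A *m K *m Gi *m Sig);
    set x3 := \tr (A *m A *m A *m Ki *m Gi *m Sig) => htr.
  apply/eqP; rewrite -subr_eq0; apply/eqP.
  rewrite (_ : _ - _ = (lam * (x1 + x1) - lam ^+ 2 * x2) - lam ^+ 2 * (s * (x3 + T * t + b * t + r'))); last by ring.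
  by rewrite htr subrr.
have Sne : (S%:R : R) != 0 by rewrite pnatr_eq0 -lt0n.
split.
  rewrite /Ltest -/T bias /kappa /rr -/r' -/t.
  set d := denom A Gam lam S in hden *.
  have hd : d = 1 - lam * s * t by [].
  have hTd : T = lam * s * (b * t + r') / d.
    apply: (mulIf hden); rewrite divfK // hd mulrBr mulr1 {1}hT; ring.
  rewrite hTd /s; field.
  by rewrite hden Sne.
move=> cAU cGU.
have hU : Umat u = U by [].
have hUT : U^T = U by rewrite /U /Umat trmx_mul trmxK.
clearbody U.
have cUA : U *m A = A *m U by [].
have cUG : U *m Gam = Gam *m U by [].
have cUK : U *m K = K *m U by rewrite /K /Kmat mulmxDl mulmxDr cAU cGU.
have cUKi : U *m Ki = Ki *m U by rewrite eKi comm_inv.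
have cUGm : U *m G = G *m U by rewrite (commG U cUK cUKi cUA).
have cUGi : U *m Gi = Gi *m U by rewrite eGi comm_inv.
have rules2 := (rules, cUA, swapL cUA, cUG, swapL cUG, cUK, swapL cUK, cUKi, swapL cUKi,
  cUGm, swapL cUGm, cUGi, swapL cUGi).
set Sg := (X in Sig = X).
set kap := kappa A Gam lam S.
set rho := rr A Gam u lam S.
set al := lam * s * b * (1 + lam * kap * s) + lam * s * (lam * rho * s).
set Q := A *m A *m Gam *m Gam *m Ki *m Ki *m Ki *m Gi *m U.
have eS : Sg = al *: M + (lam * s) *: Q.
  rewrite /Sg /al /M !mulmxDl -!scalemxAl scalerDr scalerA scalerDl -addrA.
  congr (_ + _); rewrite addrC; congr (_ + _).
  by rewrite /Q ?mulmxA ?rules2.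
have hGT : G^T = G.
  rewrite eG trB trZ trD trZ !trmx_mul tr_scalar_mx hKT hKiT hAT.
  by rewrite ?mulmxA ?rules.
have hGiT : Gi^T = Gi by rewrite eGi trmx_inv hGT.
have hSgT : Sg^T = Sg.
  rewrite eS trD !trZ /M /Q !trmx_mul hAT hGam hKiT hGiT hUT.
  by rewrite ?mulmxA ?rules2.
have hTr : \tr (A *m Sg) = al * t + (lam * s) * r'.
  rewrite eS mulmxDr -!scalemxAr mxtraceD !mxtraceZ.
  congr (_ * _ + _ * _).
    by rewrite /M /t /tAKG -/Ki -/Gi ?mulmxA ?rules2.
  by rewrite /Q /r' ?mulmxA ?rules2.
have gen (X : 'M[R]_n) : X = 2%:R *: (X *m Gi) - lam *: (X *m K *m Gi) - (lam * s) *: (X *m Ki *m A *m A *m Gi).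
  rewrite {1}(_ : X = X *m G *m Gi); last by rewrite (cancelL GGi).
  rewrite eG mulmxBr mulmxBl mul_mx_scalar -scalemxAl -scalemxAr mulmxDr.
  by rewrite -scalemxAl mulmxDl -scalemxAr -scalemxAl scalerDr scalerA opprD addrA ?mulmxA.
have FM : lam *: (K *m M + M *m K) - lam ^+ 2 *: (K *m M *m K) - lam ^+ 2 *: (s *: (A *m M *m A)) = lam *: A.
  by rewrite [in RHS]eA /M ?mulmxA ?rules modid.
set V := A *m A *m Gam *m Gam *m Ki *m Ki *m U.
have FQ : lam *: (K *m Q + Q *m K) - lam ^+ 2 *: (K *m Q *m K) - lam ^+ 2 *: (s *: (A *m Q *m A)) = lam *: V.
  by rewrite [in RHS](gen V) /Q /V ?mulmxA ?rules2 modid.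
have hWV : W = V by rewrite /W /V ?mulmxA ?rules2.
have hst : stationary A Gam u lam S Sg.
  rewrite /stationary /Cmat -/K -/Ki -/b hU -/W hTr eS.
  rewrite -/s; apply: (@final _ _ K M Q A W V lam s al (lam * s) _ b FM FQ hWV); last by ring.
  rewrite /al /kap /rho /kappa /rr -/Ki -/Gi hU -/r' -/t.
  have hd : denom A Gam lam S = 1 - lam * s * t by [].
  rewrite hd in hden *; field.
  by rewrite hden.
by rewrite (huniq Sg hSgT hst).
Qed.
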